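(* Let $\Sigma_A$ be a nonempty subshift of finite type on $M$ symbols with topological entropy $h$. Then $\Sigma_A$ contains a periodic orbit of period at most $1+M\,e^{1-h}$.
   Context: For a matrix $A\in\{0,1\}^{M\times M}$, $\Sigma_A=\{(x_i)_{i\in\mathbb Z}\in\{1,\dots,M\}^{\mathbb Z}: A(x_i,x_{i+1})=1\ \forall i\}$ with the shift $\sigma((x_i))_i=x_{i+1}$ and the product topology; $h$ is the topological entropy of $\sigma$ on $\Sigma_A$. *)

(* Defs.v *)
From HB Require Import structures.
From mathcomp Require Import all_boot all_order all_algebra.
From mathcomp Require Import boolp classical_sets reals topology normedtype sequences exp.
Set Implicit Arguments. Unset Strict Implicit. Unset Printing Implicit Defensive.
Import Order.TTheory GRing.Theory Num.Theory numFieldTopology.Exports numFieldNormedType.Exports.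
Local Open Scope ring_scope.
Local Open Scope classical_set_scope.

(* Symbols are 'I_M (= {1,...,M} shifted by one); points are maps int -> 'I_M. *)

Definition SFT (M : nat) (A : 'M[bool]_M) : set (int -> 'I_M) :=
  [set x | forall i : int, A (x i) (x (i + 1)) = true].

Definition sft_shift (M : nat) (x : int -> 'I_M) : int -> 'I_M := fun i => x (i + 1).

Definition lang (M : nat) (A : 'M[bool]_M) (n : nat) : {set {ffun 'I_n -> 'I_M}} :=
  [set w : {ffun 'I_n -> 'I_M} | `[< exists x, SFT A x /\ forall i : 'I_n, x (Posz (val i)) = w i >]].

Definition sft_entropy (R : realType) (M : nat) (A : 'M[bool]_M) : R :=
  limn (fun n : nat => ln (#|lang A n.+1|%:R : R) / (n.+1)%:R).

(* Main.v *)
Require Import Defs.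
From HB Require Import structures.
From mathcomp Require Import all_boot all_order all_algebra.
From mathcomp Require Import boolp classical_sets reals topology normedtype sequences exp.
From mathcomp Require Import zify ring lra.
Import Order.TTheory GRing.Theory Num.Theory numFieldTopology.Exports numFieldNormedType.Exports.
Local Open Scope ring_scope.
Local Open Scope classical_set_scope.

Set Implicit Arguments. Unset Strict Implicit. Unset Printing Implicit Defensive.



Lemma iter_shift M k (x : int -> 'I_M) :
  iter k (@sft_shift M) x = fun n => x (n + k%:Z).
Proof.
elim: k => [|k IH] /=; first by apply/funext => n; rewrite addr0.
rewrite IH /sft_shift; apply/funext => n; congr x.
rewrite -addrA; congr (_ + _); rewrite -[1]/(Posz 1) -PoszD; congr Posz; lia.
Qed.

Definition per M (A : 'M[bool]_M) (p : nat) :=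
  exists x, SFT A x /\ iter p (@sft_shift M) x = x.

Lemma cycle_periodic M (A : 'M[bool]_M) (c : nat -> 'I_M) (L : nat) :
  (0 < L)%N -> (forall t, (t < L)%N -> A (c t) (c t.+1)) -> c L = c 0 ->
  per A L.
Proof.
move=> L0 Hc HL.
have Lnz : (Posz L != 0) by rewrite eqz_nat -lt0n.
exists (fun n : int => c (absz (n %% L)%Z)); split.
  move=> i /=.
  have ge0 := modz_ge0 i Lnz.
  have lt := ltz_pmod i (L0 : (0 < Posz L)%R).
  set r := absz (i %% L)%Z.
  have hr : Posz r = (i %% L)%Z by rewrite /r gez0_abs.
  have rL : (r < L)%N by rewrite -ltz_nat hr.
  have -> : absz ((i + 1) %% L)%Z = (r.+1 %% L)%N.
    by rewrite -modzDml -hr -[1]/(Posz 1) -PoszD modz_nat addn1.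
  case: (ltngtP r.+1 L) => h.
  - by rewrite modn_small // Hc.
  - lia.
  - by rewrite h modnn -HL -h Hc.
rewrite iter_shift; apply/funext => n; by rewrite modzDr.
Qed.

Lemma walk_cycle M (A : 'M[bool]_M) (g : nat -> 'I_M) (i j : nat) :
  (i < j)%N -> (forall t, (i <= t)%N -> (t < j)%N -> A (g t) (g t.+1)) ->
  g i = g j -> per A (j - i).
Proof.
move=> ij Hg Heq.
apply: (@cycle_periodic M A (fun t => g (i + t)%N)).
- by rewrite subn_gt0.
- move=> t tL; rewrite addnS; apply: Hg; lia.
- by rewrite addn0 subnKC ?Heq // ltnW.
Qed.



Lemma langP M (A : 'M[bool]_M) n (w : {ffun 'I_n -> 'I_M}) :
  w \in lang A n <-> exists x, SFT A x /\ forall i : 'I_n, x (Posz (val i)) = w i.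
Proof. by rewrite inE; split => [/asboolP|H]; last apply/asboolP. Qed.

Lemma SFT_nat M (A : 'M[bool]_M) x n : SFT A x -> A (x (Posz n)) (x (Posz n.+1)).
Proof. by move=> H; have := H (Posz n); rewrite -[1]/(Posz 1) -PoszD addn1. Qed.

Lemma word_inj M (A : 'M[bool]_M) p k (w : {ffun 'I_k -> 'I_M}) :
  (forall q, (0 < q)%N -> per A q -> (p <= q)%N) -> (k < p)%N ->
  w \in lang A k -> injective w.
Proof.
move=> Hmin kp /langP [y [Sy Hy]].
suff H : forall i j : 'I_k, (i < j)%N -> w i = w j -> False.
  move=> i j e; case: (ltngtP i j) => h; first by case: (H _ _ h e).
  - by case: (H _ _ h (esym e)).
  - exact: val_inj.
move=> i j ij e.
have P : per A (j - i).
  apply: (@walk_cycle M A (fun n => y (Posz n))) => //.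
    by move=> t _ _; apply: SFT_nat.
  by rewrite /= !Hy.
have := Hmin _ _ P; have := ltn_ord j; lia.
Qed.

Lemma incr_id (F : nat -> nat) k :
  (forall n, (n.+1 < k)%N -> (F n < F n.+1)%N) -> (forall n, (n < k)%N -> (F n < k)%N) ->
  forall n, (n < k)%N -> F n = n.
Proof.
move=> Hi Hb.
have H1 : forall m n, (n + m < k)%N -> (F n + m <= F (n + m))%N.
  elim=> [|m IH] n h; first by rewrite !addn0.
  have := IH n ltac:(lia); have := Hi (n + m)%N ltac:(lia); rewrite !addnS; lia.
move=> n nk.
have := H1 n 0%N ltac:(lia); have := H1 (k.-1 - n)%N n ltac:(lia).
have := Hb (n + (k.-1 - n))%N ltac:(lia). rewrite add0n; lia.
Qed.

Lemma word_set_inj M (A : 'M[bool]_M) p k (w w' : {ffun 'I_k -> 'I_M}) :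
  (forall q, (0 < q)%N -> per A q -> (p <= q)%N) -> (k < p)%N ->
  w \in lang A k -> w' \in lang A k -> w @: [set: 'I_k]%SET = w' @: [set: 'I_k]%SET -> w = w'.
Proof.
move=> Hmin kp wL w'L eS.
case: k w w' kp wL w'L eS => [|k0] w w' kp wL w'L eS; first by apply/ffunP => [[]].
pose k := k0.+1; rewrite -/k in kp.
move: (wL) (w'L) => /langP [y [Sy Hy]] /langP [y' [Sy' Hy']].
pose f (t : 'I_k) := odflt t [pick s | w s == w' t].
have Hf : forall t, w (f t) = w' t.
  move=> t; rewrite /f; case: pickP => [s /eqP //|].
  have : w' t \in w @: [set: 'I_k]%SET by rewrite eS imset_f // inE.
  by case/imsetP => s _ -> /(_ s); rewrite eqxx.
pose W n := y (Posz n). pose W' n := y' (Posz n).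
pose F n := val (f (inord n)) : nat.
have HW : forall n, (n < k)%N -> W n = w (inord n).
  by move=> n nk; rewrite /W -Hy; congr (y (Posz _)); rewrite /= inordK.
have HW' : forall n, (n < k)%N -> W' n = w' (inord n).
  by move=> n nk; rewrite /W' -Hy'; congr (y' (Posz _)); rewrite /= inordK.
have HF : forall n, (n < k)%N -> W (F n) = W' n.
  move=> n nk; rewrite HW ?ltn_ord // HW' // -Hf; congr (w _); apply: val_inj; by rewrite /= inordK // ltn_ord.
have Fb : forall n, (n < k)%N -> (F n < k)%N by move=> ? _; apply: ltn_ord.
have Finc : forall n, (n.+1 < k)%N -> (F n < F n.+1)%N.
  move=> n nk; rewrite ltnNge; apply/negP => le.
  set a := F n.+1; set b := F n.
  have P : per A (b.+1 - a).
    apply: (@walk_cycle M A (fun s => if (s <= b)%N then W s else W a) a b.+1) => //.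
    - move=> t ta tb; case: (ltngtP t b) => h.
      + exact: SFT_nat.
      + lia.
      + rewrite h /b /a (HF n) ?(HF n.+1); try lia.
        exact: SFT_nat.
    - by rewrite le ltnn.
  have := Hmin (b.+1 - a)%N ltac:(lia) P; have := Fb n ltac:(lia); lia.
have Fid := incr_id Finc Fb.
apply/ffunP => i; rewrite -[i]inord_val -HW ?ltn_ord // -HW' ?ltn_ord //.
by rewrite -HF ?ltn_ord // Fid // ltn_ord.
Qed.



Lemma card_lang_bin M (A : 'M[bool]_M) p k :
  (forall q, (0 < q)%N -> per A q -> (p <= q)%N) -> (k < p)%N ->
  (#|lang A k| <= 'C(M, k))%N.
Proof.
move=> Hmin kp.
pose phi (w : {ffun 'I_k -> 'I_M}) := w @: [set: 'I_k]%SET.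
rewrite -(card_in_imset (f := phi)); last first.
  by move=> w w' wL w'L; exact: (word_set_inj Hmin kp wL w'L).
rewrite -[X in 'C(X, _)]card_ord -card_draws; apply: subset_leq_card.
apply/fintype.subsetP => _ /imsetP [w wL ->]; rewrite inE /phi.
rewrite card_imset ?cardsT ?card_ord //; exact: (word_inj Hmin kp wL).
Qed.

Lemma card_lang_add M (A : 'M[bool]_M) a b :
  (#|lang A (a + b)| <= #|lang A a| * #|lang A b|)%N.
Proof.
pose psi (w : {ffun 'I_(a + b) -> 'I_M}) :=
  ([ffun i : 'I_a => w (lshift b i)], [ffun i : 'I_b => w (rshift a i)]).
have inj : injective psi.
  move=> w w' [] /ffunP e1 /ffunP e2; apply/ffunP => i.
  case: (splitP i) => j ej.
  - have := e1 j; rewrite !ffunE => e; rewrite (_ : i = lshift b j) //; exact: val_inj.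
  - have := e2 j; rewrite !ffunE => e; rewrite (_ : i = rshift a j) //; exact: val_inj.
rewrite -cardsX -(card_imset (lang A (a + b)) inj); apply: subset_leq_card.
apply/fintype.subsetP => _ /imsetP [w /langP [y [Sy Hy]] ->]; rewrite inE /=.
apply/andP; split; apply/langP.
- exists y; split => // i; rewrite ffunE -Hy //.
- exists (fun n => y (n + a%:Z)); split.
    move=> n; have := Sy (n + a%:Z); by rewrite addrAC.
  move=> i; rewrite ffunE -Hy /=; congr y; rewrite -PoszD addnC //.
Qed.

Lemma card_lang_pow M (A : 'M[bool]_M) m k :
  (#|lang A (m * k)| <= #|lang A k| ^ m)%N.
Proof.
elim: m => [|m IH].
  by rewrite mul0n expn0; apply: leq_trans (max_card _) _; rewrite card_ffun !card_ord expn0.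
rewrite mulSn expnS; apply: leq_trans (card_lang_add _ _ _) _.
by rewrite leq_mul2l IH orbT.
Qed.

Lemma lang_gt0 M (A : 'M[bool]_M) n : SFT A !=set0 -> (0 < #|lang A n|)%N.
Proof.
case=> x Sx; apply/card_gt0P; exists [ffun i : 'I_n => x (Posz (val i))].
by apply/langP; exists x; split => // i; rewrite ffunE.
Qed.

Lemma per_exists M (A : 'M[bool]_M) : SFT A !=set0 -> exists q, (0 < q)%N /\ per A q.
Proof.
case=> x Sx.
pose g (i : 'I_M.+1) := x (Posz (val i)).
have [[i [j [ij e]]]|H] := pselect (exists i j : 'I_M.+1, (i < j)%N /\ g i = g j).
  exists (j - i)%N; split; first by rewrite subn_gt0.
  apply: (@walk_cycle M A (fun n => x (Posz n))) => //.
  by move=> t _ _; apply: SFT_nat.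
exfalso.
have gi : injective g.
  move=> i j e; case: (ltngtP i j) => h.
  - by case: H; exists i, j.
  - by case: H; exists j, i.
  - exact: val_inj.
by have := leq_card _ gi; rewrite !card_ord ltnn.
Qed.



Lemma step_ineq (R : realType) k : (k.+1%:R ^+ k : R) <= expR 1 * k%:R ^+ k.
Proof.
case: k => [|k]; first by rewrite !expr0 mulr1; have := @expR_ge1Dx R 1; lra.
have k0 : (k.+1%:R : R) != 0 by rewrite pnatr_eq0.
have -> : (k.+2%:R : R) = k.+1%:R * (1 + k.+1%:R^-1).
  by rewrite mulrDr mulr1 mulfV // -natr1.
rewrite exprMn [X in _ <= X]mulrC; apply: ler_wpM2l; first by rewrite exprn_ge0 ?ler0n.
apply: le_trans (_ : expR (k.+1%:R^-1) ^+ k.+1 <= _).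
  rewrite ler_pXn2r // ?expR_ge1Dx // nnegrE ?expR_ge0 //.
  by rewrite addr_ge0 ?invr_ge0 ?ler0n.
by rewrite -expRM_natl mulfV.
Qed.

Lemma fact_bound (R : realType) k : (k%:R ^+ k : R) <= expR 1 ^+ k * k`!%:R.
Proof.
elim: k => [|k IH]; first by rewrite !expr0 mulr1.
rewrite exprS factS natrM.
apply: le_trans (_ : k.+1%:R * (expR 1 * k%:R ^+ k) <= _).
  by rewrite ler_wpM2l ?ler0n // step_ineq.
rewrite exprS.
have -> : expR 1 * expR 1 ^+ k * (k.+1%:R * k`!%:R) = k.+1%:R * (expR 1 * (expR 1 ^+ k * k`!%:R)) :> R
  by ring.
by rewrite ler_wpM2l ?ler0n // ler_wpM2l ?expR_ge0.
Qed.

Lemma h_bound (R : realType) M (A : 'M[bool]_M) k : SFT A !=set0 -> (0 < k)%N ->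
  sft_entropy R A <= ln (#|lang A k|%:R : R) / k%:R.
Proof.
move=> ne k0.
set B := ln (#|lang A k|%:R : R) / k%:R.
pose u := fun n : nat => ln (#|lang A n.+1|%:R : R) / (n.+1)%:R.
have Lpos : forall n, (0 : R) < #|lang A n|%:R by move=> n; rewrite ltr0n lang_gt0.
have ub : forall m, u (m.+1 * k).-1 <= B.
  move=> m; rewrite /u prednK ?muln_gt0 //.
  apply: le_trans (_ : ln ((#|lang A k| ^ m.+1)%:R : R) / (m.+1 * k)%:R <= _).
    rewrite ler_wpM2r ?invr_ge0 ?ler0n // ler_ln ?posrE ?Lpos //; last first.
      by rewrite ltr0n expn_gt0 lang_gt0.
    by rewrite ler_nat card_lang_pow.
  rewrite natrX lnXn ?Lpos // natrM /B -mulr_natr.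
  have m0 : (m.+1%:R : R) != 0 by rewrite pnatr_eq0.
  have kk : (k%:R : R) != 0 by rewrite pnatr_eq0 -lt0n.
  rewrite le_eqVlt; apply/orP; left; apply/eqP; field; by rewrite kk /= addrC natr1 m0.
rewrite /sft_entropy -/u.
have [cv|ncv] := pselect (cvgn u).
  rewrite leNgt; apply/negP => Blt.
  have [N _ HN] := cvgr_gt _ cv _ Blt.
  have Nk : (N.+1 <= N.+1 * k)%N by rewrite leq_pmulr.
  have NN : (N <= (N.+1 * k).-1)%N by lia.
  have := HN _ NN.
  by rewrite ltNge ub.
by rewrite (dvgP ncv) /B divr_ge0 ?ler0n // ln_ge0 // ler1n lang_gt0.
Qed.

Lemma final_alg (R : realType) (k M L : nat) (h : R) : (0 < k)%N -> (0 < L)%N ->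
  (L%:R * k%:R ^+ k : R) <= (M%:R * expR 1) ^+ k -> h <= ln (L%:R : R) / k%:R ->
  (k%:R : R) <= M%:R * expR (1 - h).
Proof.
move=> k0 L0 HL hb.
set c := expR (ln (L%:R : R) / k%:R).
have kk : (k%:R : R) != 0 by rewrite pnatr_eq0 -lt0n.
have ck : c ^+ k = L%:R.
  by rewrite /c -expRM_natl mulrC divfK // lnK // posrE ltr0n.
have kc : k%:R * c <= M%:R * expR 1.
  rewrite -(ler_pXn2r k0) ?nnegrE ?mulr_ge0 ?ler0n ?expR_ge0 //.
  by rewrite exprMn ck mulrC.
have eh : expR h <= c by rewrite ler_expR.
rewrite expRD expRN mulrA ler_pdivlMr ?expR_gt0 //.
apply: le_trans kc; by rewrite ler_wpM2l ?ler0n.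
Qed.



Lemma ffact_le_exp n k : (n ^_ k <= n ^ k)%N.
Proof.
elim: k n => [|k IH] n; first by [].
rewrite ffactnS expnS leq_mul2l; apply/orP; right.
apply: leq_trans (IH _) _; case: (posnP k) => [->|kp] //.
by rewrite leq_exp2r // leq_pred.
Qed.

Unset Implicit Arguments.

Theorem mainTheorem8 (R : realType) (M : nat) (A : 'M[bool]_M) :
  SFT A !=set0 ->
  exists (x : int -> 'I_M) (p : nat),
    SFT A x /\ (0 < p)%N /\ iter p (@sft_shift M) x = x /\
    ((p%:R : R) <= 1 + (M%:R : R) * expR (1 - sft_entropy R A)).
Proof.
move=> ne.
have [q [q0 Pq]] := per_exists ne.
have HP : exists n, (0 < n)%N && `[< per A n >] by exists q; rewrite q0; apply/asboolP.
case: (ex_minnP HP) => p /andP[p0 /asboolP [x [Sx Hx]]] Hmin.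
have Hmin' : forall q, (0 < q)%N -> per A q -> (p <= q)%N.
  by move=> q' q'0 Pq'; apply: Hmin; rewrite q'0; apply/asboolP.
exists x, p; do 3 split => //.
case: p p0 Hmin Hmin' Hx => [//|k] _ _ Hmin' Hx.
rewrite -natr1 addrC lerD2l.
have [->|k0] := posnP k; first by rewrite mulr_ge0 ?ler0n ?expR_ge0.
apply: final_alg (lang_gt0 k ne) _ (h_bound R ne k0) => //.
have Lb := card_lang_bin Hmin' (ltnSn k).
have fb := fact_bound R k.
have bf : ('C(M, k) * k`! <= M ^ k)%N by rewrite bin_ffact ffact_le_exp.
apply: le_trans (_ : 'C(M, k)%:R * (expR 1 ^+ k * k`!%:R) <= _).
  apply: ler_pM; rewrite ?ler0n ?exprn_ge0 ?ler0n //; by rewrite ler_nat.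
have -> : 'C(M, k)%:R * (expR 1 ^+ k * k`!%:R) = expR 1 ^+ k * ('C(M, k) * k`!)%:R :> R.
  by rewrite natrM; ring.
rewrite exprMn -natrX [X in _ <= X]mulrC; apply: ler_wpM2l; first by rewrite exprn_ge0 // expR_ge0.
by rewrite ler_nat.
Qed.
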